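(* Let $(c_{i,j})_{0\le i,j\le 3}$ be real numbers satisfying the fourteen equations (E0), (R1)–(R9), (O1)–(O4). Then $$\big|\,c_{2,2}+c_{3,3}-c_{3,2}-c_{2,3}\,\big|\le \frac{\sqrt7}{4}<1 .$$
   Context: (E0): $\sum_{i=0}^3\sum_{j=0}^3 c_{i,j}=4$. Regularity equations: (R1) $c_{0,1}+c_{0,3}+c_{2,1}+c_{2,3}=c_{0,0}+c_{0,2}+c_{2,0}+c_{2,2}$; (R2) $c_{1,1}+c_{1,3}+c_{3,1}+c_{3,3}=c_{0,0}+c_{0,2}+c_{2,0}+c_{2,2}$; (R3) $c_{1,0}+c_{1,2}+c_{3,0}+c_{3,2}=c_{0,0}+c_{0,2}+c_{2,0}+c_{2,2}$; (R4) $c_{2,1}+c_{2,3}=c_{2,0}+c_{2,2}$; (R5) $c_{1,1}+c_{1,3}+3c_{3,1}+3c_{3,3}=2c_{2,0}+2c_{2,2}$; (R6) $c_{1,0}+c_{1,2}+3c_{3,0}+3c_{3,2}=2c_{2,0}+2c_{2,2}$; (R7) $c_{0,1}+c_{2,1}+3c_{0,3}+3c_{2,3}=2c_{0,2}+2c_{2,2}$; (R8) $c_{1,1}+c_{3,1}+3c_{1,3}+3c_{3,3}=2c_{0,2}+2c_{2,2}$; (R9) $c_{1,2}+c_{3,2}=c_{0,2}+c_{2,2}$. Orthogonality equations: (O1) $\sum_{i=0}^3\sum_{j=0}^3 c_{i,j}^2=4$; (O2) $c_{3,3}c_{1,1}+c_{3,2}c_{1,0}+c_{2,3}c_{0,1}+c_{2,2}c_{0,0}=0$;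 (O3) $c_{3,3}c_{1,3}+c_{3,2}c_{1,2}+c_{2,3}c_{0,3}+c_{2,2}c_{0,2}+c_{3,1}c_{1,1}+c_{3,0}c_{1,0}+c_{2,1}c_{0,1}+c_{2,0}c_{0,0}=0$; (O4) $c_{3,3}c_{3,1}+c_{3,2}c_{3,0}+c_{2,3}c_{2,1}+c_{2,2}c_{2,0}+c_{1,3}c_{1,1}+c_{1,2}c_{1,0}+c_{0,3}c_{0,1}+c_{0,2}c_{0,0}=0$. *)

(* Defs.v *)
From Stdlib Require Import Reals.
Open Scope R_scope.

Definition sum44 (f : nat -> nat -> R) : R :=
  f 0%nat 0%nat + f 0%nat 1%nat + f 0%nat 2%nat + f 0%nat 3%nat
+ f 1%nat 0%nat + f 1%nat 1%nat + f 1%nat 2%nat + f 1%nat 3%nat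
+ f 2%nat 0%nat + f 2%nat 1%nat + f 2%nat 2%nat + f 2%nat 3%nat
+ f 3%nat 0%nat + f 3%nat 1%nat + f 3%nat 2%nat + f 3%nat 3%nat.

(* Main.v *)
Require Import Defs.
From Stdlib Require Import Reals Lra Psatz.
Open Scope R_scope.

Lemma helper (c00 c01 c02 c03 c10 c11 c12 c13 c20 c21 c22 c23 c30 c31 c32 c33 s : R) :
  s * s = 7 ->
  c00 = -c13+c22-c31-2*c33 ->
  c01 = 1/2-c13+c23-c31-2*c33 ->
  c02 = 1/2+c13-c22+c33 ->
  c03 = c13-c23+c33 ->
  c10 = 1/2-c13-c31+c32-2*c33 ->
  c11 = 1-c13-c31-c33 ->
  c12 = 1/2+c13-c32+c33 ->
  c20 = 1/2-c22+c31+c33 ->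
  c21 = 1/2-c23+c31+c33 ->
  c30 = c31-c32+c33 ->
  c00*c00+c01*c01+c02*c02+c03*c03+c10*c10+c11*c11+c12*c12+c13*c13+c20*c20+c21*c21+c22*c22+c23*c23+c30*c30+c31*c31+c32*c32+c33*c33 = 4 -> c33*c11 + c32*c10 + c23*c01 + c22*c00 = 0 -> c33*c13 + c32*c12 + c23*c03 + c22*c02 + c31*c11 + c30*c10 + c21*c01 + c20*c00 = 0 -> c33*c31 + c32*c30 + c23*c21 + c22*c20 + c13*c11 + c12*c10 + c03*c01 + c02*c00 = 0 ->
  s * (c22 + c33 - c32 - c23) <= 7/4 /\ - (s * (c22 + c33 - c32 - c23)) <= 7/4.
Proof.
  intros Hs H00 H01 H02 H03 H10 H11 H12 H20 H21 H30 HO1 HO2 HO3 HO4.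
  subst c00 c01 c02 c03 c10 c11 c12 c20 c21 c30.
  assert (Hf : (c13 - c31) * (4*c13 + 4*c31 + 8*c33 - 2) = 0) by lra.
  destruct (Rmult_integral _ _ Hf) as [HA | HB].
  - assert (E : c31 = c13) by lra. subst c31.
    split.
    + assert (0 <= (c13 + ((-1/4))*c22 + ((-1/4))*c23 + ((-1/4))*c32 + ((3/4))*c33 + ((3/16))) * (c13 + ((-1/4))*c22 + ((-1/4))*c23 + ((-1/4))*c32 + ((3/4))*c33 + ((3/16)))) by apply Rle_0_sqr. assert (0 <= (c22 + ((-1/3))*c23 + ((-1/3))*c32 + ((-1/3))*c33 + ((-1/3)+(-1/12)*s)) * (c22 + ((-1/3))*c23 + ((-1/3))*c32 + ((-1/3))*c33 + ((-1/3)+(-1/12)*s))) by apply Rle_0_sqr. assert (0 <= (c23 + ((-1/2))*c32 + ((-1/2))*c33 + ((-1/8)+(1/16)*s)) * (c23 + ((-1/2))*c32 + ((-1/2))*c33 + ((-1/8)+(1/16)*s))) by apply Rle_0_sqr. assert (0 <= (c32 + ((-1/1))*c33 + ((-1/4)+(1/8)*s)) * (c32 + ((-1/1))*c33 + ((-1/4)+(1/8)*s))) by apply Rle_0_sqr. lra.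
    + assert (0 <= (c13 + ((-1/4))*c22 + ((-1/4))*c23 + ((-1/4))*c32 + ((3/4))*c33 + ((3/16))) * (c13 + ((-1/4))*c22 + ((-1/4))*c23 + ((-1/4))*c32 + ((3/4))*c33 + ((3/16)))) by apply Rle_0_sqr. assert (0 <= (c22 + ((-1/3))*c23 + ((-1/3))*c32 + ((-1/3))*c33 + ((-1/3)+(1/12)*s)) * (c22 + ((-1/3))*c23 + ((-1/3))*c32 + ((-1/3))*c33 + ((-1/3)+(1/12)*s))) by apply Rle_0_sqr. assert (0 <= (c23 + ((-1/2))*c32 + ((-1/2))*c33 + ((-1/8)+(-1/16)*s)) * (c23 + ((-1/2))*c32 + ((-1/2))*c33 + ((-1/8)+(-1/16)*s))) by apply Rle_0_sqr. assert (0 <= (c32 + ((-1/1))*c33 + ((-1/4)+(-1/8)*s)) * (c32 + ((-1/1))*c33 + ((-1/4)+(-1/8)*s))) by apply Rle_0_sqr. lra.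
  - assert (E : c31 = 1/2 - 2*c33 - c13) by lra. subst c31.
    split.
    + assert (0 <= (c22 + ((-5/16)+(-1/16)*s)) * (c22 + ((-5/16)+(-1/16)*s))) by apply Rle_0_sqr. assert (0 <= (c23 + ((-1/16)+(1/16)*s)) * (c23 + ((-1/16)+(1/16)*s))) by apply Rle_0_sqr. assert (0 <= (c32 + ((-1/16)+(1/16)*s)) * (c32 + ((-1/16)+(1/16)*s))) by apply Rle_0_sqr. assert (0 <= (c33 + ((3/16)+(-1/16)*s)) * (c33 + ((3/16)+(-1/16)*s))) by apply Rle_0_sqr. lra.
    + assert (0 <= (c22 + ((-5/16)+(1/16)*s)) * (c22 + ((-5/16)+(1/16)*s))) by apply Rle_0_sqr. assert (0 <= (c23 + ((-1/16)+(-1/16)*s)) * (c23 + ((-1/16)+(-1/16)*s))) by apply Rle_0_sqr. assert (0 <= (c32 + ((-1/16)+(-1/16)*s)) * (c32 + ((-1/16)+(-1/16)*s))) by apply Rle_0_sqr. assert (0 <= (c33 + ((3/16)+(1/16)*s)) * (c33 + ((3/16)+(1/16)*s))) by apply Rle_0_sqr. lra.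
Qed.

Theorem mainTheorem8 (c : nat -> nat -> R) :
  (* (E0) *)
  sum44 c = 4 ->
  (* (R1) *)
  c 0%nat 1%nat + c 0%nat 3%nat + c 2%nat 1%nat + c 2%nat 3%nat
    = c 0%nat 0%nat + c 0%nat 2%nat + c 2%nat 0%nat + c 2%nat 2%nat ->
  (* (R2) *)
  c 1%nat 1%nat + c 1%nat 3%nat + c 3%nat 1%nat + c 3%nat 3%nat
    = c 0%nat 0%nat + c 0%nat 2%nat + c 2%nat 0%nat + c 2%nat 2%nat ->
  (* (R3) *)
  c 1%nat 0%nat + c 1%nat 2%nat + c 3%nat 0%nat + c 3%nat 2%nat
    = c 0%nat 0%nat + c 0%nat 2%nat + c 2%nat 0%nat + c 2%nat 2%nat ->
  (* (R4) *)
  c 2%nat 1%nat + c 2%nat 3%nat = c 2%nat 0%nat + c 2%nat 2%nat ->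
  (* (R5) *)
  c 1%nat 1%nat + c 1%nat 3%nat + 3 * c 3%nat 1%nat + 3 * c 3%nat 3%nat
    = 2 * c 2%nat 0%nat + 2 * c 2%nat 2%nat ->
  (* (R6) *)
  c 1%nat 0%nat + c 1%nat 2%nat + 3 * c 3%nat 0%nat + 3 * c 3%nat 2%nat
    = 2 * c 2%nat 0%nat + 2 * c 2%nat 2%nat ->
  (* (R7) *)
  c 0%nat 1%nat + c 2%nat 1%nat + 3 * c 0%nat 3%nat + 3 * c 2%nat 3%nat
    = 2 * c 0%nat 2%nat + 2 * c 2%nat 2%nat ->
  (* (R8) *)
  c 1%nat 1%nat + c 3%nat 1%nat + 3 * c 1%nat 3%nat + 3 * c 3%nat 3%nat
    = 2 * c 0%nat 2%nat + 2 * c 2%nat 2%nat ->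
  (* (R9) *)
  c 1%nat 2%nat + c 3%nat 2%nat = c 0%nat 2%nat + c 2%nat 2%nat ->
  (* (O1) *)
  sum44 (fun i j => (c i j) ^ 2) = 4 ->
  (* (O2) *)
  c 3%nat 3%nat * c 1%nat 1%nat + c 3%nat 2%nat * c 1%nat 0%nat
    + c 2%nat 3%nat * c 0%nat 1%nat + c 2%nat 2%nat * c 0%nat 0%nat = 0 ->
  (* (O3) *)
  c 3%nat 3%nat * c 1%nat 3%nat + c 3%nat 2%nat * c 1%nat 2%nat
    + c 2%nat 3%nat * c 0%nat 3%nat + c 2%nat 2%nat * c 0%nat 2%nat
    + c 3%nat 1%nat * c 1%nat 1%nat + c 3%nat 0%nat * c 1%nat 0%nat
    + c 2%nat 1%nat * c 0%nat 1%nat + c 2%nat 0%nat * c 0%nat 0%nat = 0 ->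
  (* (O4) *)
  c 3%nat 3%nat * c 3%nat 1%nat + c 3%nat 2%nat * c 3%nat 0%nat
    + c 2%nat 3%nat * c 2%nat 1%nat + c 2%nat 2%nat * c 2%nat 0%nat
    + c 1%nat 3%nat * c 1%nat 1%nat + c 1%nat 2%nat * c 1%nat 0%nat
    + c 0%nat 3%nat * c 0%nat 1%nat + c 0%nat 2%nat * c 0%nat 0%nat = 0 ->
  Rabs (c 2%nat 2%nat + c 3%nat 3%nat - c 3%nat 2%nat - c 2%nat 3%nat)
    <= sqrt 7 / 4
  /\ sqrt 7 / 4 < 1.
Proof.
  intros E0 R1 R2 R3 R4 R5 R6 R7 R8 R9 O1 O2 O3 O4.
  unfold sum44 in E0, O1. simpl in O1.
  set (s := sqrt 7).
  assert (Hs : s * s = 7) by (apply sqrt_sqrt; lra).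
  assert (Hs0 : 0 < s) by (apply sqrt_lt_R0; lra).
  destruct (helper (c 0%nat 0%nat) (c 0%nat 1%nat) (c 0%nat 2%nat) (c 0%nat 3%nat) (c 1%nat 0%nat) (c 1%nat 1%nat) (c 1%nat 2%nat) (c 1%nat 3%nat) (c 2%nat 0%nat) (c 2%nat 1%nat) (c 2%nat 2%nat) (c 2%nat 3%nat) (c 3%nat 0%nat) (c 3%nat 1%nat) (c 3%nat 2%nat) (c 3%nat 3%nat) s Hs) as [Hp Hm]; try lra.
  set (X := c 2%nat 2%nat + c 3%nat 3%nat - c 3%nat 2%nat - c 2%nat 3%nat) in *.
  split.
  - apply Rabs_le; split; nra.
  - nra.
Qed.
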